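(* Let $\rho_1,\rho_2$ be two-qubit states and let $\rho'=(I_2\otimes\Lambda^{\mathrm{tel}}_{\rho_2})(\rho_1)$ be the end-to-end state of a non-postselected entanglement swap (the second qubit of $\rho_1$ is teleported using $\rho_2$ as resource). Then $\mathcal B(\rho')=\rho'_{\mathcal B}$, where $\rho'_{\mathcal B}=\sum_k\lambda'_k|\Psi_{(k)}\rangle\langle\Psi_{(k)}|$ is the Bell-diagonal state with $\lambda_0'=\lambda_0\mu_0+\lambda_1\mu_1+\lambda_2\mu_2+\lambda_3\mu_3$, $\lambda_1'=\lambda_0\mu_1+\lambda_1\mu_0+\lambda_2\mu_3+\lambda_3\mu_2$, $\lambda_2'=\lambda_0\mu_2+\lambda_2\mu_0+\lambda_3\mu_1+\lambda_1\mu_3$, $\lambda_3'=\lambda_0\mu_3+\lambda_3\mu_0+\lambda_1\mu_2+\lambda_2\mu_1$, with $(\lambda_0,\dots,\lambda_3)$ and $(\mu_0,\dots,\mu_3)$ the Bell-diagonal elements $\langle\Psi_{(k)}|\rho_1|\Psi_{(k)}\rangle$ and $\langle\Psi_{(k)}|\rho_2|\Psi_{(k)}\rangle$.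
   Context: Bell states: for qubit registers $(R,T)$, $|\Psi_{mn}\rangle_{RT}=(I_R\otimes(X^mZ^n)_T)\tfrac1{\sqrt2}(|00\rangle+|11\rangle)$; $(|\Psi_{(0)}\rangle,\dots,|\Psi_{(3)}\rangle)=(|\Psi_{00}\rangle,|\Psi_{01}\rangle,|\Psi_{10}\rangle,|\Psi_{11}\rangle)$. Bell-diagonal twirl $\mathcal B(\rho)=\tfrac14\sum_{P\in\{I,X,Y,Z\}}(P\otimes P)\rho(P\otimes P)^\dagger=\sum_k\langle\Psi_{(k)}|\rho|\Psi_{(k)}\rangle|\Psi_{(k)}\rangle\langle\Psi_{(k)}|$. Teleportation channel with resource $\rho$ on $AB$, input on $C$: $\Lambda^{\mathrm{tel}}_\rho(\sigma)=\sum_{i,j}(Z^jX^i)_B\langle\Psi_{ij}|_{CA}(\sigma_C\otimes\rho_{AB})|\Psi_{ij}\rangle_{CA}(Z^jX^i)_B^\dagger$; in $(I_2\otimes\Lambda^{\mathrm{tel}}_{\rho_2})(\rho_1)$ it acts (linearly) on the second qubit of $\rho_1$. *)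

(* Defs.v *)
From HB Require Import structures.
From mathcomp Require Import all_boot all_order all_algebra.
From mathcomp Require Import algC.
From mathcomp Require Import mxtens.
Set Implicit Arguments. Unset Strict Implicit. Unset Printing Implicit Defensive.
Import Order.TTheory GRing.Theory Num.Theory.
Local Open Scope ring_scope.

(* Two-qubit index: 'I_4 with (a,b) |-> 2a+b (first qubit is the most significant). *)
Definition qix (a b : 'I_2) : 'I_4 := @mxtens_index 2 2 (a, b).
Definition qfst (k : 'I_4) : 'I_2 := (@mxtens_unindex 2 2 k).1.
Definition qsnd (k : 'I_4) : 'I_2 := (@mxtens_unindex 2 2 k).2.

Definition k0 : 'I_4 := @Ordinal 4 0 isT.
Definition k1 : 'I_4 := @Ordinal 4 1 isT.
Definition k2 : 'I_4 := @Ordinal 4 2 isT.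
Definition k3 : 'I_4 := @Ordinal 4 3 isT.

Definition adj {m n : nat} (A : 'M[algC]_(m, n)) : 'M[algC]_(n, m) :=
  (map_mx Num.conj A)^T.

Definition PX : 'M[algC]_2 := \matrix_(i, j) (i != j)%:R.
Definition PZ : 'M[algC]_2 :=
  \matrix_(i, j) (if i == j then (-1) ^+ (val i) else 0).
Definition PY : 'M[algC]_2 :=
  \matrix_(i, j) (if i == j then 0 else if val i == 0%N then - 'i else 'i).

Definition phiplus : 'cV[algC]_4 :=
  (sqrtC 2)^-1 *: \col_(k < 4) (if (val k == 0%N) || (val k == 3%N) then 1 else 0).

Definition PsiMN (m n : 'I_2) : 'cV[algC]_4 :=
  ((1%:M : 'M[algC]_2) *t (PX ^+ m *m PZ ^+ n)) *m phiplus.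

Definition Psi (k : 'I_4) : 'cV[algC]_4 := PsiMN (qfst k) (qsnd k).

Definition bell_elem (rho : 'M[algC]_4) (k : 'I_4) : algC :=
  (adj (Psi k) *m rho *m Psi k) 0 0.

Definition bell_proj (k : 'I_4) : 'M[algC]_4 := Psi k *m adj (Psi k).

Definition twirl (rho : 'M[algC]_4) : 'M[algC]_4 :=
  (4%:R)^-1 *: \sum_(P <- [:: 1%:M; PX; PY; PZ])
     ((P *t P) *m rho *m adj (P *t P) : 'M[algC]_4).

(* Teleportation channel with resource rho on AB, input sigma on C
   (qubit order C, A, B):
   sum_{i,j} (Z^j X^i)_B <Psi_ij|_{CA} (sigma_C (x) rho_AB) |Psi_ij>_{CA} (Z^j X^i)_B^dagger *)
Definition tel (rho : 'M[algC]_4) (sigma : 'M[algC]_2) : 'M[algC]_2 :=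
  \sum_(i < 2) \sum_(j < 2)
    let U := PZ ^+ j *m PX ^+ i in
    let bra : 'M[algC]_(1 * 2, 4 * 2) := adj (PsiMN i j) *t (1%:M : 'M[algC]_2) in
    let ket : 'M[algC]_(4 * 2, 1 * 2) := PsiMN i j *t (1%:M : 'M[algC]_2) in
    U *m ((bra *m (sigma *t rho : 'M[algC]_(4 * 2)) *m ket) : 'M[algC]_2) *m adj U.

(* (I_2 (x) L) applied (linearly) to the second qubit of a two-qubit operator:
   writing rho = sum_{r,r'} |r><r'| (x) sigma^{r r'},
   (I (x) L)(rho) = sum_{r,r'} |r><r'| (x) L(sigma^{r r'}). *)
Definition id_tensor (L : 'M[algC]_2 -> 'M[algC]_2) (rho : 'M[algC]_4) : 'M[algC]_4 :=
  \matrix_(k, l)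
    (L (\matrix_(c, c') rho (qix (qfst k) c) (qix (qfst l) c'))) (qsnd k) (qsnd l).

Definition is_state (rho : 'M[algC]_4) : Prop :=
  [/\ adj rho = rho,
      (forall v : 'cV[algC]_4, 0 <= (adj v *m rho *m v) 0 0)
    & \tr rho = 1].

(* Main.v *)
Require Import Defs.
From HB Require Import structures.
From mathcomp Require Import all_boot all_order all_algebra.
From mathcomp Require Import algC.
From mathcomp Require Import mxtens.
From mathcomp Require Import ring.
Import Order.TTheory GRing.Theory Num.Theory.
Set Implicit Arguments. Unset Strict Implicit. Unset Printing Implicit Defensive.
Local Open Scope ring_scope.

Definition ev {m n} (A : 'M[algC]_(m, n)) (i j : nat) : algC :=
  match @insub _ (fun k => k < m)%N _ i, @insub _ (fun k => k < n)%N _ j with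
  | Some x, Some y => A x y | _, _ => 0 end.
Arguments ev : simpl never.

Lemma evE m n (A : 'M[algC]_(m, n)) (x : 'I_m) (y : 'I_n) : A x y = ev A x y.
Proof. by rewrite /ev !valK. Qed.

Fixpoint fsum_from (s n : nat) (h : nat -> algC) : algC :=
  match n with 0%N => 0 | n'.+1 => h s + fsum_from s.+1 n' h end.
Definition fsum n h := fsum_from 0 n h.

Lemma fsum_fromE n : forall s h, fsum_from s n h = \sum_(k < n) h (s + k)%N.
Proof.
elim: n => [|n IH] s h /=; first by rewrite big_ord0.
by rewrite big_ord_recl IH addn0; congr (_ + _); apply: eq_bigr => k _; rewrite /= addSnnS.
Qed.
Lemma fsumE n h : fsum n h = \sum_(k < n) h k.
Proof. by rewrite /fsum fsum_fromE. Qed.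

Definition R m n (A : 'M[algC]_(m, n)) (f : nat -> nat -> algC) :=
  forall (i : 'I_m) (j : 'I_n), A i j = f i j.

Definition fmul n (f g : nat -> nat -> algC) := fun i j => fsum n (fun k => f i k * g k j).
Definition fadd (f g : nat -> nat -> algC) := fun i j => f i j + g i j.
Definition fscale a (f : nat -> nat -> algC) := fun i j => a * f i j.
Definition ftens p q (f g : nat -> nat -> algC) :=
  fun i j => f (i %/ p)%N (j %/ q)%N * g (i %% p)%N (j %% q)%N.

Lemma R_mul m n p A B f g : @R m n A f -> @R n p B g -> R (A *m B) (fmul n f g).
Proof.
move=> hA hB i j; rewrite mxE /fmul fsumE.
by apply: eq_bigr => k _; rewrite hA hB.
Qed.
Lemma R_add m n A B f g : @R m n A f -> @R m n B g -> R (A + B) (fadd f g).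
Proof. by move=> hA hB i j; rewrite mxE hA hB. Qed.
Lemma R_scale m n a A f : @R m n A f -> R (a *: A) (fscale a f).
Proof. by move=> hA i j; rewrite mxE hA. Qed.
Lemma R_tens m n p q A B f g : @R m n A f -> @R p q B g -> R (A *t B) (ftens p q f g).
Proof. by move=> hA hB i j; rewrite mxE hA hB. Qed.
Lemma R_t22 (A B : 'M[algC]_2) f g : R A f -> R B g -> @R 4 4 (A *t B) (ftens 2 2 f g).
Proof. exact: (@R_tens 2 2 2 2). Qed.
Lemma R_t24 (A : 'M[algC]_2) (B : 'M[algC]_4) f g : R A f -> R B g -> @R 8 8 (A *t B) (ftens 4 4 f g).
Proof. exact: (@R_tens 2 2 4 4). Qed.
Lemma R_t1422 (A : 'M[algC]_(1, 4)) (B : 'M[algC]_2) f g : R A f -> R B g -> @R 2 8 (A *t B) (ftens 2 2 f g).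
Proof. exact: (@R_tens 1 4 2 2). Qed.
Lemma R_t4122 (A : 'M[algC]_(4, 1)) (B : 'M[algC]_2) f g : R A f -> R B g -> @R 8 2 (A *t B) (ftens 2 2 f g).
Proof. exact: (@R_tens 4 1 2 2). Qed.
Lemma R_var m n (A : 'M[algC]_(m, n)) : R A (ev A).
Proof. by move=> i j; rewrite evE. Qed.

Definition fid (i j : nat) : algC := if eqn i j then 1 else 0.
Definition fPX (i j : nat) : algC := if eqn i j then 0 else 1.
Definition fPZ (i j : nat) : algC := if eqn i j then (if eqn i 0 then 1 else -1) else 0.

Ltac ncase i h := case: i h => [|[|[|[|[|[|[|[|i]]]]]]]] h; try (by exfalso; move: h; rewrite !ltnS ?ltn0).
Ltac ocase i := let h := fresh "h" in case: i => [i h]; ncase i h.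

Lemma R_id n : R (1%:M : 'M[algC]_n) fid.
Proof. move=> i j; rewrite mxE /fid; have -> : eqn i j = (i == j) by []. by case: (i == j). Qed.
Lemma R_one n : R (1 : 'M[algC]_n.+1) fid.
Proof. exact: R_id. Qed.
Lemma R_PX : R PX fPX.
Proof. by move=> i j; rewrite mxE; ocase i; ocase j. Qed.
Lemma R_PZ : R PZ fPZ.
Proof. by move=> i j; rewrite mxE; ocase i; ocase j. Qed.

Definition c : algC := (sqrtC 2)^-1.
Definition psi (m n a : nat) : algC :=
  match m, n, a with
  | 0%N, 0%N, 0%N => 1 | 0%N, 0%N, 3%N => 1 | 0%N, 1%N, 0%N => 1 | 0%N, 1%N, 3%N => -1
  | 1%N, 0%N, 1%N => 1 | 1%N, 0%N, 2%N => 1 | 1%N, 1%N, 1%N => 1 | 1%N, 1%N, 2%N => -1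
  | _, _, _ => 0 end.
Definition fpsi (m n : nat) := fun (a _ : nat) => c * psi m n a.
Definition fapsi (m n : nat) := fun (_ a : nat) => c * psi m n a.

Ltac solveR := repeat first [ eapply R_PX | eapply R_PZ | eapply R_id | eapply R_one
  | eapply R_mul | eapply R_add | eapply R_scale
  | eapply R_t22 | eapply R_t24 | eapply R_t1422 | eapply R_t4122 | eapply R_var ].

Ltac nnorm := repeat match goal with
  | |- context [(?a %/ ?b)%N] => let v := eval vm_compute in (a %/ b)%N in change (a %/ b)%N with v
  | |- context [(?a %% ?b)%N] => let v := eval vm_compute in (a %% b)%N in change (a %% b)%N with v
  | |- context [(?a * ?b)%N] => let v := eval vm_compute in (a * b)%N in change (a * b)%N with v
  end.
Ltac fcomp := cbv beta iota zeta delta [fmul fadd fscale ftens fsum]; nnorm;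
  cbv beta iota zeta delta [fsum_from]; nnorm;
  cbv beta iota zeta delta [fid fPX fPZ fpsi fapsi psi eqn orb nat_of_ord].

Lemma R_eq m n (A B : 'M[algC]_(m, n)) f g : R A f -> R B g ->
  (forall i j, (i < m)%N -> (j < n)%N -> f i j = g i j) -> A = B.
Proof. by move=> hA hB h; apply/matrixP => i j; rewrite hA hB h. Qed.

Lemma c_ge0 : 0 <= c.
Proof. by rewrite /c invr_ge0 sqrtC_ge0 ler0n. Qed.
Lemma conj_c : c^* = c.
Proof. exact: geC0_conj c_ge0. Qed.
Lemma c2 : c * c = 2%:R^-1.
Proof. by rewrite /c -expr2 exprVn sqrtCK. Qed.
Lemma c4 : c * c * (c * c) = 4%:R^-1.
Proof. by rewrite c2 -invfM -natrM. Qed.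

Lemma phi_R : R phiplus (fun i _ => c * (if eqn i 0 || eqn i 3 then 1 else 0)).
Proof. by move=> i j; rewrite !mxE; ocase i. Qed.

Lemma R_cv n (A : 'cV[algC]_n) f g : R A f -> (forall i, (i < n)%N -> f i 0%N = g i 0%N) -> R A g.
Proof. by move=> hf h i j; rewrite hf (ord1 j) h. Qed.

Lemma R_Psi (m n : 'I_2) : R (PsiMN m n) (fpsi m n).
Proof.
rewrite /PsiMN; case: m => [[|[|//]] hm]; case: n => [[|[|//]] hn];
rewrite ?expr0 ?expr1 ?mul1mx ?mulmx1; (eapply R_cv; [ eapply R_mul; [solveR | exact: phi_R] | ]);
move=> i hi; ncase i hi; fcomp; ring.
Qed.

Lemma conj0 : (0 : algC)^* = 0. Proof. exact: rmorph0. Qed.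
Lemma conj1 : (1 : algC)^* = 1. Proof. exact: rmorph1. Qed.
Lemma conjN (x : algC) : (- x)^* = - x^*. Proof. exact: rmorphN. Qed.
Lemma conjM (x y : algC) : (x * y)^* = x^* * y^*. Proof. exact: rmorphM. Qed.

Lemma psi_conj m n a : (psi m n a)^* = psi m n a.
Proof.
by move: m n a => [|[|m]] [|[|n]] [|[|[|[|a]]]]; rewrite /psi ?conj0 ?conjN ?conj1.
Qed.

Lemma adjE m n (A : 'M[algC]_(m, n)) i j : adj A i j = (A j i)^*.
Proof. by rewrite !mxE. Qed.
Lemma R_adjPsi (m n : 'I_2) : R (adj (PsiMN m n)) (fapsi m n).
Proof. by move=> i j; rewrite adjE R_Psi /fpsi /fapsi conjM conj_c psi_conj. Qed.

Lemma adj_mul m n p (A : 'M[algC]_(m, n)) (B : 'M[algC]_(n, p)) : adj (A *m B) = adj B *m adj A.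
Proof. by rewrite /adj map_mxM trmx_mul. Qed.
Lemma adj_tens m n p q (A : 'M[algC]_(m, n)) (B : 'M[algC]_(p, q)) : adj (A *t B) = adj A *t adj B.
Proof. by apply/matrixP => i j; rewrite !mxE conjM. Qed.
Lemma adj_id n : adj (1%:M : 'M[algC]_n) = 1%:M.
Proof. by apply/matrixP => i j; rewrite adjE !mxE eq_sym; exact: rmorph_nat. Qed.
Lemma adj_one n : adj (1 : 'M[algC]_n.+1) = 1.
Proof. exact: adj_id. Qed.
Lemma adj_PX : adj PX = PX.
Proof. by apply/matrixP => i j; rewrite !mxE; ocase i; ocase j; rewrite /= ?conj0 ?conj1. Qed.
Lemma adj_PZ : adj PZ = PZ.
Proof. by apply/matrixP => i j; rewrite !mxE; ocase i; ocase j; rewrite /= ?conj0 ?conj1 ?conjN ?conj1. Qed.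
Lemma adj_PY : adj PY = PY.
Proof. by apply/matrixP => i j; rewrite !mxE; ocase i; ocase j; rewrite /= ?conj0 ?conjN ?conjCi ?opprK. Qed.

Lemma adj_ZX : adj (PZ *m PX) = PX *m PZ.
Proof. by rewrite adj_mul adj_PX adj_PZ. Qed.

Definition fyy (a b : nat) : algC :=
  if eqn (a + b) 3 then (match a with 0%N | 3%N => -1 | _ => 1 end) else 0.
Lemma R_PYY : @R 4 4 (PY *t PY) fyy.
Proof.
move=> i j; rewrite mxE; ocase i; ocase j; rewrite /fyy /= !mxE /=;
rewrite ?mulr0 ?mul0r ?mulrN ?mulNr ?opprK ?mulCii ?opprK //.
Qed.

Definition o0 : 'I_2 := @Ordinal 2 0 isT.
Definition o1 : 'I_2 := @Ordinal 2 1 isT.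
Lemma Psi_k0 : Psi k0 = PsiMN o0 o0. Proof. by rewrite /Psi; congr PsiMN; apply: val_inj. Qed.
Lemma Psi_k1 : Psi k1 = PsiMN o0 o1. Proof. by rewrite /Psi; congr PsiMN; apply: val_inj. Qed.
Lemma Psi_k2 : Psi k2 = PsiMN o1 o0. Proof. by rewrite /Psi; congr PsiMN; apply: val_inj. Qed.
Lemma Psi_k3 : Psi k3 = PsiMN o1 o1. Proof. by rewrite /Psi; congr PsiMN; apply: val_inj. Qed.

Lemma sum2 (V : zmodType) (F : 'I_2 -> V) : \sum_(i < 2) F i = F o0 + F o1.
Proof. by rewrite !big_ord_recl big_ord0 addr0; congr (F _ + F _); apply: val_inj. Qed.

Lemma R_entry11 (A : 'M[algC]_(1, 1)) f (i j : 'I_1) : R A f -> A i j = f 0%N 0%N.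
Proof. by move=> h; rewrite h (ord1 i) (ord1 j). Qed.

Ltac solveR2 := repeat first [ eapply R_adjPsi | eapply R_Psi | eapply R_PYY
  | eapply R_PX | eapply R_PZ | eapply R_id | eapply R_one
  | eapply R_mul | eapply R_add | eapply R_scale
  | eapply R_t22 | eapply R_t24 | eapply R_t1422 | eapply R_t4122 | eapply R_var ].

Ltac evscal := repeat match goal with
  | |- context [@fun_of_matrix _ 1 1 ?A ?i ?j] =>
     let h := fresh "h" in eassert (h : R A _); [solveR2 | rewrite (R_entry11 i j h); clear h]
  end.

Ltac fcomp2 := cbv beta iota zeta delta [fmul fadd fscale ftens fsum]; nnorm;
  cbv beta iota zeta delta [fsum_from]; nnorm;
  cbv beta iota zeta delta [fid fPX fPZ fpsi fapsi psi fyy eqn orb nat_of_ord o0 o1 addn addn_rec Nat.add].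

Ltac ijcase := let i := fresh "i" in let j := fresh "j" in let hi := fresh "hi" in let hj := fresh "hj" in
  move=> i j hi hj; ncase i hi; ncase j hj.

Lemma tel_pauli rho s : tel rho s = bell_elem rho k0 *: s + bell_elem rho k1 *: (PZ *m s *m PZ)
  + bell_elem rho k2 *: (PX *m s *m PX) + bell_elem rho k3 *: (PX *m PZ *m s *m (PZ *m PX)).
Proof.
rewrite /tel !sum2 /bell_elem Psi_k0 Psi_k1 Psi_k2 Psi_k3; cbv zeta.
rewrite ?expr0 ?expr1 ?mul1mx ?mulmx1 ?adj_ZX ?adj_PX ?adj_PZ ?adj_one ?mul1mx ?mulmx1.
Time evscal.
eapply R_eq; [solveR2 | solveR2 |].
Time (ijcase; fcomp2; rewrite -?c2; ring).
Qed.

Lemma R_S (A : 'M[algC]_4) (a b : 'I_2) :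
  R (\matrix_(c, c') A (qix a c) (qix b c')) (fun i j => ev A (a * 2 + i)%N (b * 2 + j)%N).
Proof. by move=> i j; rewrite mxE evE. Qed.

Ltac solveR3 := repeat first [ eapply R_adjPsi | eapply R_Psi | eapply R_PYY | eapply R_S
  | eapply R_PX | eapply R_PZ | eapply R_id | eapply R_one
  | eapply R_mul | eapply R_add | eapply R_scale
  | eapply R_t22 | eapply R_t24 | eapply R_t1422 | eapply R_t4122 | eapply R_var ].

Lemma idt_pauli (a0 a1 a2 a3 : algC) (L : 'M[algC]_2 -> 'M[algC]_2) rho :
  (forall s, L s = a0 *: s + a1 *: (PZ *m s *m PZ) + a2 *: (PX *m s *m PX)
                   + a3 *: (PX *m PZ *m s *m (PZ *m PX))) ->
  id_tensor L rho = a0 *: rho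
    + a1 *: (((1%:M : 'M[algC]_2) *t PZ : 'M[algC]_4) *m rho *m ((1%:M : 'M[algC]_2) *t PZ : 'M[algC]_4))
    + a2 *: (((1%:M : 'M[algC]_2) *t PX : 'M[algC]_4) *m rho *m ((1%:M : 'M[algC]_2) *t PX : 'M[algC]_4))
    + a3 *: (((1%:M : 'M[algC]_2) *t (PX *m PZ) : 'M[algC]_4) *m rho
             *m ((1%:M : 'M[algC]_2) *t (PZ *m PX) : 'M[algC]_4)).
Proof.
move=> hL; apply/matrixP => k l; rewrite /id_tensor [LHS]mxE hL.
match goal with |- @fun_of_matrix _ _ _ ?A _ _ = @fun_of_matrix _ _ _ ?B _ _ =>
  let h1 := fresh in let h2 := fresh in
  eassert (h1 : R A _); [solveR3|]; eassert (h2 : R B _); [solveR3|]; rewrite h1 h2; clear h1 h2 end.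
Time (ocase k; ocase l; cbv beta iota delta [qsnd qfst mxtens_unindex nat_of_ord fst snd];
  nnorm; fcomp2; ring).
Qed.

Lemma twirl_bell X : twirl X =
    bell_elem X k0 *: bell_proj k0 + bell_elem X k1 *: bell_proj k1
  + bell_elem X k2 *: bell_proj k2 + bell_elem X k3 *: bell_proj k3.
Proof.
rewrite /twirl !big_cons big_nil addr0 !adj_tens adj_id adj_PX adj_PY adj_PZ.
rewrite /bell_elem /bell_proj Psi_k0 Psi_k1 Psi_k2 Psi_k3.
evscal.
eapply R_eq; [solveR3 | solveR3 |].
Time (ijcase; fcomp2; rewrite -c4; ring).
Qed.

Unset Implicit Arguments.

Theorem corollary2 (rho1 rho2 : 'M[algC]_4) :
  is_state rho1 -> is_state rho2 ->
  let l := bell_elem rho1 in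
  let mu := bell_elem rho2 in
  twirl (id_tensor (tel rho2) rho1) =
      (l k0 * mu k0 + l k1 * mu k1 + l k2 * mu k2 + l k3 * mu k3) *: bell_proj k0
    + (l k0 * mu k1 + l k1 * mu k0 + l k2 * mu k3 + l k3 * mu k2) *: bell_proj k1
    + (l k0 * mu k2 + l k2 * mu k0 + l k3 * mu k1 + l k1 * mu k3) *: bell_proj k2
    + (l k0 * mu k3 + l k3 * mu k0 + l k1 * mu k2 + l k2 * mu k1) *: bell_proj k3.
Proof.
move=> _ _; cbv zeta.
rewrite (idt_pauli rho1 (tel_pauli rho2)) twirl_bell.
set m0 := bell_elem rho2 k0; set m1 := bell_elem rho2 k1;
set m2 := bell_elem rho2 k2; set m3 := bell_elem rho2 k3.
congr (_ *: _ + _ *: _ + _ *: _ + _ *: _);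
rewrite /bell_elem ?Psi_k0 ?Psi_k1 ?Psi_k2 ?Psi_k3; evscal; fcomp2; ring.
Qed.
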